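(* Let $(M,P,g)$ be a 4-dimensional Riemannian almost product manifold with $\operatorname{tr}P=0$ and let $L$ be any Riemannian $P$-tensor on $M$. Then at every point: (1) $\rho(L)=\frac14\{\tau(L)\,g+\tau^*(L)\,\widetilde g\}$ (i.e. $M$ is almost Einstein with respect to $L$); (2) for every pair of orthonormal vectors $x,y$ spanning a totally real 2-plane (i.e. $g(x,Px)=g(x,Py)=g(y,Px)=g(y,Py)=0$) one has $L(x,y,y,x)=\tau(L)/8$, so the totally real sectional curvature with respect to $L$ is pointwise constant; (3) for every unit vector $x$ with $g(x,Px)=0$ (so that $\mathrm{span}\{x,Px\}$ is an invariant 2-plane) one has $L(x,Px,Px,x)=0$.
   Context: A Riemannian almost product manifold $(M,P,g)$: $M$ smooth, $P$ a $(1,1)$-tensor field with $P^2=\mathrm{id}$, $g$ Riemannian with $g(Px,Py)=g(x,y)$. A curvature-like tensor is a $(0,4)$-tensor $L$ with $L(x,y,z,w)=-L(y,x,z,w)=-L(x,y,w,z)$ and $L(x,y,z,w)+L(y,z,x,w)+L(z,x,y,w)=0$; it is a Riemannian $P$-tensor if moreover $L(x,y,Pz,Pw)=L(x,y,z,w)$. $\widetilde g(x,y)=g(x,Py)$. With $g^{ij}$ the inverse matrix of $g$ in a basis $\{e_i\}$: $\rho(L)(y,z)=\sum g^{ij}L(e_i,y,z,e_j)$, $\tau(L)=\sum g^{ij}\rho(L)(e_i,e_j)$, $\rho^*(L)(y,z)=\sum g^{ij}L(e_i,y,z,Pe_j)$, $\tau^*(L)=\sum g^{ij}\rho^*(L)(e_i,e_j)$.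 *)

(* Defs.v *)
(* Pointwise (tangent-space) linear algebra of a Riemannian
   almost product manifold, in a basis {e_i} of T_pM = R^n (column vectors). *)
From HB Require Import structures.
From mathcomp Require Import all_boot all_order all_algebra.
Set Implicit Arguments. Unset Strict Implicit. Unset Printing Implicit Defensive.
Import Order.TTheory GRing.Theory Num.Theory.
Local Open Scope ring_scope.

Definition evec (R : rcfType) (n : nat) (i : 'I_n) : 'cV[R]_n := delta_mx i ord0.

Definition bil (R : rcfType) (n : nat) (G : 'M[R]_n) (x y : 'cV[R]_n) : R :=
  (x^T *m G *m y) ord0 ord0.

Definition tens4 (R : rcfType) (n : nat) (Lc : 'I_n -> 'I_n -> 'I_n -> 'I_n -> R)
  (x y z w : 'cV[R]_n) : R :=
  \sum_(i < n) \sum_(j < n) \sum_(k < n) \sum_(l < n)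
     Lc i j k l * x i ord0 * y j ord0 * z k ord0 * w l ord0.

Definition gtilde (R : rcfType) (n : nat) (G P : 'M[R]_n) (x y : 'cV[R]_n) : R :=
  bil G x (P *m y).

Definition RAP_structure (R : rcfType) (n : nat) (G P : 'M[R]_n) : Prop :=
  [/\ G^T = G,
      (forall x : 'cV[R]_n, x != 0 -> 0 < bil G x x),
      P *m P = 1%:M &
      (forall x y : 'cV[R]_n, bil G (P *m x) (P *m y) = bil G x y)].

Definition curvature_like (R : rcfType) (n : nat)
  (Lc : 'I_n -> 'I_n -> 'I_n -> 'I_n -> R) : Prop :=
  [/\ (forall x y z w, tens4 Lc x y z w = - tens4 Lc y x z w),
      (forall x y z w, tens4 Lc x y z w = - tens4 Lc x y w z) &
      (forall x y z w, tens4 Lc x y z w + tens4 Lc y z x w + tens4 Lc z x y w = 0)].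

Definition riemannian_P_tensor (R : rcfType) (n : nat) (P : 'M[R]_n)
  (Lc : 'I_n -> 'I_n -> 'I_n -> 'I_n -> R) : Prop :=
  curvature_like Lc /\
  (forall x y z w, tens4 Lc x y (P *m z) (P *m w) = tens4 Lc x y z w).

Definition rho (R : rcfType) (n : nat) (G : 'M[R]_n)
  (Lc : 'I_n -> 'I_n -> 'I_n -> 'I_n -> R) (y z : 'cV[R]_n) : R :=
  \sum_(i < n) \sum_(j < n) invmx G i j * tens4 Lc (evec R i) y z (evec R j).

Definition tau (R : rcfType) (n : nat) (G : 'M[R]_n)
  (Lc : 'I_n -> 'I_n -> 'I_n -> 'I_n -> R) : R :=
  \sum_(i < n) \sum_(j < n) invmx G i j * rho G Lc (evec R i) (evec R j).

Definition rhostar (R : rcfType) (n : nat) (G P : 'M[R]_n)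
  (Lc : 'I_n -> 'I_n -> 'I_n -> 'I_n -> R) (y z : 'cV[R]_n) : R :=
  \sum_(i < n) \sum_(j < n) invmx G i j * tens4 Lc (evec R i) y z (P *m evec R j).

Definition taustar (R : rcfType) (n : nat) (G P : 'M[R]_n)
  (Lc : 'I_n -> 'I_n -> 'I_n -> 'I_n -> R) : R :=
  \sum_(i < n) \sum_(j < n) invmx G i j * rhostar G P Lc (evec R i) (evec R j).

(* Main.v *)
Require Import Defs.
From HB Require Import structures.
From mathcomp Require Import all_boot all_order all_algebra.
From mathcomp Require Import ring lra.
Set Implicit Arguments. Unset Strict Implicit. Unset Printing Implicit Defensive.
Import Order.TTheory GRing.Theory Num.Theory.
Local Open Scope ring_scope.

Definition lin (R : rcfType) (f : 'cV[R]_4 -> R) :=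
  forall (a : R) (u v : 'cV[R]_4), f (a *: u + v) = a * f u + f v.

Lemma lin0 (R : rcfType) (f : 'cV[R]_4 -> R) : lin f -> f 0 = 0.
Proof.
move=> hf; have := hf (-1) 0 0; rewrite scaler0 addr0 => e.
have : f 0 + f 0 = f 0 by rewrite {1}e; ring.
by move/eqP; rewrite -subr_eq0 addrK => /eqP.
Qed.

Lemma linZ (R : rcfType) (f : 'cV[R]_4 -> R) a u : lin f -> f (a *: u) = a * f u.
Proof. by move=> hf; rewrite -[a *: u]addr0 hf lin0 // addr0. Qed.

Lemma lin_sum (R : rcfType) (f : 'cV[R]_4 -> R) (I : Type) (r : seq I) (c : I -> R)
  (v : I -> 'cV[R]_4) : lin f -> f (\sum_(i <- r) c i *: v i) = \sum_(i <- r) c i * f (v i).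
Proof.
move=> hf; elim/big_rec2: _ => [|i y1 y2 _ <-]; first exact: lin0.
by rewrite hf.
Qed.

Lemma vec_expand (R : rcfType) (x : 'cV[R]_4) : x = \sum_i x i 0 *: evec R i.
Proof.
rewrite {1}(matrix_sum_delta x); apply: eq_bigr => i _.
by rewrite big_ord1.
Qed.

Lemma lin_std (R : rcfType) (f : 'cV[R]_4 -> R) x :
  lin f -> f x = \sum_i x i 0 * f (evec R i).
Proof. by move=> hf; rewrite {1}(vec_expand x) lin_sum. Qed.

Lemma T_lin1 (R : rcfType) (Lc : 'I_4 -> 'I_4 -> 'I_4 -> 'I_4 -> R) y z w :
  lin (fun x => tens4 Lc x y z w).
Proof.
move=> a u v; rewrite /tens4 mulr_sumr -big_split; apply: eq_bigr => i _.
rewrite mulr_sumr -big_split; apply: eq_bigr => j _.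
rewrite mulr_sumr -big_split; apply: eq_bigr => k _.
rewrite mulr_sumr -big_split; apply: eq_bigr => l _.
rewrite !mxE /=; ring.
Qed.

Lemma T_lin2 (R : rcfType) (Lc : 'I_4 -> 'I_4 -> 'I_4 -> 'I_4 -> R) x z w :
  lin (fun y => tens4 Lc x y z w).
Proof.
move=> a u v; rewrite /tens4 mulr_sumr -big_split; apply: eq_bigr => i _.
rewrite mulr_sumr -big_split; apply: eq_bigr => j _.
rewrite mulr_sumr -big_split; apply: eq_bigr => k _.
rewrite mulr_sumr -big_split; apply: eq_bigr => l _.
rewrite !mxE /=; ring.
Qed.

Lemma T_lin3 (R : rcfType) (Lc : 'I_4 -> 'I_4 -> 'I_4 -> 'I_4 -> R) x y w :
  lin (fun z => tens4 Lc x y z w).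
Proof.
move=> a u v; rewrite /tens4 mulr_sumr -big_split; apply: eq_bigr => i _.
rewrite mulr_sumr -big_split; apply: eq_bigr => j _.
rewrite mulr_sumr -big_split; apply: eq_bigr => k _.
rewrite mulr_sumr -big_split; apply: eq_bigr => l _.
rewrite !mxE /=; ring.
Qed.

Lemma T_lin4 (R : rcfType) (Lc : 'I_4 -> 'I_4 -> 'I_4 -> 'I_4 -> R) x y z :
  lin (fun w => tens4 Lc x y z w).
Proof.
move=> a u v; rewrite /tens4 mulr_sumr -big_split; apply: eq_bigr => i _.
rewrite mulr_sumr -big_split; apply: eq_bigr => j _.
rewrite mulr_sumr -big_split; apply: eq_bigr => k _.
rewrite mulr_sumr -big_split; apply: eq_bigr => l _.
rewrite !mxE /=; ring.
Qed.

Lemma bilE (R : rcfType) (G : 'M[R]_4) x y :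
  bil G x y = \sum_j (\sum_i x i 0 * G i j) * y j 0.
Proof.
rewrite /bil !mxE; apply: eq_bigr => j _; rewrite !mxE; congr (_ * _).
by apply: eq_bigr => i _; rewrite mxE.
Qed.

Lemma bil_lin1 (R : rcfType) (G : 'M[R]_4) y : lin (fun x => bil G x y).
Proof.
move=> a u v; rewrite !bilE mulr_sumr -big_split; apply: eq_bigr => j _ /=.
rewrite !mulr_suml mulr_sumr -big_split; apply: eq_bigr => i _ /=.
rewrite !mxE; ring.
Qed.

Lemma bil_lin2 (R : rcfType) (G : 'M[R]_4) x : lin (fun y => bil G x y).
Proof.
move=> a u v; rewrite !bilE mulr_sumr -big_split; apply: eq_bigr => j _ /=.
rewrite !mxE; ring.
Qed.

Lemma bil_sym (R : rcfType) (G : 'M[R]_4) x y : G^T = G -> bil G x y = bil G y x.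
Proof.
move=> hG; rewrite /bil.
have e : x^T *m G *m y = (x^T *m G *m y)^T.
  apply/matrixP => i j. rewrite (ord1 i) (ord1 j). by rewrite [RHS]mxE.
by rewrite e !trmx_mul trmxK hG mulmxA.
Qed.

Lemma T_pair0 (R : rcfType) (P : 'M[R]_4) (Lc : 'I_4 -> 'I_4 -> 'I_4 -> 'I_4 -> R) :
  riemannian_P_tensor P Lc -> forall x y z w, tens4 Lc z x y w = tens4 Lc y w z x.
Proof.
move=> [[hA hB hC] _] x y z w.
have := hC x y z w; have := hC y z w x; have := hC z w x y; have := hC w x y z.
have := hB y z w x; have := hB z w y x; have := hA w y z x; have := hB y w z x.
have := hB w x z y; have := hA x z w y; have := hB z x w y; have := hB x y w z.
lra.
Qed.

Lemma T_pair (R : rcfType) (P : 'M[R]_4) (Lc : 'I_4 -> 'I_4 -> 'I_4 -> 'I_4 -> R) :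
  riemannian_P_tensor P Lc -> forall x y z w, tens4 Lc x y z w = tens4 Lc z w x y.
Proof. move=> hL x y z w; exact: (T_pair0 hL y z x w). Qed.

Lemma PP_id (R : rcfType) (P : 'M[R]_4) (x : 'cV[R]_4) : P *m P = 1%:M -> P *m (P *m x) = x.
Proof. by move=> h; rewrite mulmxA h mul1mx. Qed.

Lemma T_scale4 (R : rcfType) (Lc : 'I_4 -> 'I_4 -> 'I_4 -> 'I_4 -> R) x y z w a :
  tens4 Lc x y z (a *: w) = a * tens4 Lc x y z w.
Proof. exact: (linZ _ _ (T_lin4 Lc x y z)). Qed.

Lemma T_scale3 (R : rcfType) (Lc : 'I_4 -> 'I_4 -> 'I_4 -> 'I_4 -> R) x y z w a :
  tens4 Lc x y (a *: z) w = a * tens4 Lc x y z w.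
Proof. exact: (linZ _ _ (T_lin3 Lc x y w)). Qed.

Lemma T_mix34 (R : rcfType) (P : 'M[R]_4) (Lc : 'I_4 -> 'I_4 -> 'I_4 -> 'I_4 -> R) x y z w s t :
  riemannian_P_tensor P Lc -> P *m z = s *: z -> P *m w = t *: w -> s * t = -1 ->
  tens4 Lc x y z w = 0.
Proof.
move=> [_ hD] hz hw hst.
have := hD x y z w; rewrite hz hw T_scale3 T_scale4 mulrA hst.
move=> e; lra.
Qed.

Lemma T_mix12 (R : rcfType) (P : 'M[R]_4) (Lc : 'I_4 -> 'I_4 -> 'I_4 -> 'I_4 -> R) x y z w s t :
  riemannian_P_tensor P Lc -> P *m x = s *: x -> P *m y = t *: y -> s * t = -1 ->
  tens4 Lc x y z w = 0.
Proof. move=> hL hx hy hst; rewrite (T_pair hL); exact: (T_mix34 _ _ hL hx hy hst). Qed.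

Lemma T_cross (R : rcfType) (P : 'M[R]_4) (Lc : 'I_4 -> 'I_4 -> 'I_4 -> 'I_4 -> R) x y z w :
  riemannian_P_tensor P Lc -> P *m x = 1 *: x -> P *m y = 1 *: y ->
  P *m z = (-1) *: z -> P *m w = (-1) *: w -> tens4 Lc x y z w = 0.
Proof.
move=> hL hx hy hz hw; have := (hL) => -[[_ _ hC] _]; have := hC x y z w.
rewrite (T_mix34 _ _ hL hx hw) ?mulr1 ?mul1r // (T_mix12 _ _ hL hz hx) ?mulr1 //.
move=> e; lra.
Qed.

Lemma T_diag12 (R : rcfType) (P : 'M[R]_4) (Lc : 'I_4 -> 'I_4 -> 'I_4 -> 'I_4 -> R) x z w :
  riemannian_P_tensor P Lc -> tens4 Lc x x z w = 0.
Proof. move=> [[hA _ _] _]; have := hA x x z w; lra. Qed.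

Lemma T_diag34 (R : rcfType) (P : 'M[R]_4) (Lc : 'I_4 -> 'I_4 -> 'I_4 -> 'I_4 -> R) x y z :
  riemannian_P_tensor P Lc -> tens4 Lc x y z z = 0.
Proof. move=> [[_ hB _] _]; have := hB x y z z; lra. Qed.

Lemma T_part3 (R : rcfType) (P : 'M[R]_4) (Lc : 'I_4 -> 'I_4 -> 'I_4 -> 'I_4 -> R) x :
  P *m P = 1%:M -> riemannian_P_tensor P Lc -> tens4 Lc x (P *m x) (P *m x) x = 0.
Proof.
move=> hPP hL; have := hL.2 x (P *m x) (P *m x) x; rewrite PP_id //.
case: hL => [[_ hB _] _]; have := hB x (P *m x) x (P *m x); lra.
Qed.

Lemma bilZ1 (R : rcfType) (G : 'M[R]_4) a x y : bil G (a *: x) y = a * bil G x y.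
Proof. exact: (linZ _ _ (bil_lin1 G y)). Qed.
Lemma bilZ2 (R : rcfType) (G : 'M[R]_4) a x y : bil G x (a *: y) = a * bil G x y.
Proof. exact: (linZ _ _ (bil_lin2 G x)). Qed.

Lemma perp_pm (R : rcfType) (G P : 'M[R]_4) u v : RAP_structure G P ->
  P *m u = u -> P *m v = - v -> bil G u v = 0.
Proof.
case=> _ _ _ hB hu hv; have := hB u v; rewrite hu hv -scaleN1r bilZ2 => e; lra.
Qed.

Lemma exists_half (R : rcfType) (G P : 'M[R]_4) : RAP_structure G P -> \tr P = 0 ->
  exists u w : 'cV[R]_4,
    [/\ P *m u = u, P *m w = w, bil G u u = 1, bil G w w = 1 & bil G u w = 0].
Proof.
case=> hGT hpos hPP hPB htr.
set Q := 1%:M + P.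
have hQv (v : 'cV[R]_4) : Q *m v = v + P *m v by rewrite mulmxDl mul1mx.
have hPQ (v : 'cV[R]_4) : P *m (Q *m v) = Q *m v by rewrite hQv mulmxDr PP_id // addrC.
have hQQ (v : 'cV[R]_4) : Q *m (Q *m v) = 2%:R *: (Q *m v).
  by rewrite (hQv (Q *m v)) hPQ scaler_nat mulr2n.
have htrQ : \tr Q = 4%:R by rewrite mxtraceD htr mxtrace1 addr0.
have trE : \tr Q = \sum_i (Q *m evec R i) i 0.
  by rewrite /mxtrace; apply: eq_bigr => i _; rewrite /evec -colE [RHS]mxE.
case: (pickP (fun i => Q *m evec R i != 0)) => [i0 hi0 | hnone]; last first.
  exfalso; move: htrQ; rewrite trE big1 => [/eqP|i _]; first by rewrite eq_sym pnatr_eq0.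
  by have := hnone i => /negbFE/eqP ->; rewrite mxE.
set u0 := Q *m evec R i0.
have hu0 : P *m u0 = u0 := hPQ _.
have pu0 : 0 < bil G u0 u0 := hpos _ hi0.
pose c j := bil G u0 (Q *m evec R j) / bil G u0 u0.
case: (pickP (fun j => Q *m evec R j - c j *: u0 != 0)) => [j0 hj0 | hnone]; last first.
  exfalso.
  have hc j : Q *m evec R j = c j *: u0.
    by move: (hnone j) => /negbFE; rewrite subr_eq0 => /eqP.
  have e1 : \tr Q = \sum_j c j * u0 j 0.
    by rewrite trE; apply: eq_bigr => j _; rewrite hc mxE.
  have e2 : Q *m u0 = (\sum_j u0 j 0 * c j) *: u0.
    rewrite {1}(vec_expand u0) mulmx_sumr scaler_suml; apply: eq_bigr => j _.
    by rewrite -scalemxAr hc scalerA.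
  have e3 : Q *m u0 = 2%:R *: u0 := hQQ _.
  have : (\sum_j u0 j 0 * c j - 2%:R) *: u0 = 0 by rewrite scalerBl -e2 e3 subrr.
  move/eqP; rewrite scaler_eq0 (negbTE hi0) orbF subr_eq0 => /eqP es.
  have : \tr Q = 2%:R by rewrite e1 -es; apply: eq_bigr => j _; rewrite mulrC.
  by rewrite htrQ => /eqP; rewrite eqr_nat.
set w0 := Q *m evec R j0 - c j0 *: u0.
have hw0 : P *m w0 = w0 by rewrite mulmxBr -scalemxAr hPQ hu0.
have pw0 : 0 < bil G w0 w0 := hpos _ hj0.
have ouw : bil G u0 w0 = 0.
  rewrite /w0 addrC -scaleNr bil_lin2 /c; field; exact: lt0r_neq0.
pose a := (Num.sqrt (bil G u0 u0))^-1; pose b := (Num.sqrt (bil G w0 w0))^-1.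
exists (a *: u0), (b *: w0); split.
- by rewrite -scalemxAr hu0.
- by rewrite -scalemxAr hw0.
- rewrite bilZ1 bilZ2 /a.
  have hs := sqr_sqrtr (ltW pu0); have hs0 : Num.sqrt (bil G u0 u0) != 0.
    by apply: lt0r_neq0; rewrite sqrtr_gt0.
  rewrite -{3}hs; field; exact: hs0.
- rewrite bilZ1 bilZ2 /b.
  have hs := sqr_sqrtr (ltW pw0); have hs0 : Num.sqrt (bil G w0 w0) != 0.
    by apply: lt0r_neq0; rewrite sqrtr_gt0.
  rewrite -{3}hs; field; exact: hs0.
- by rewrite bilZ1 bilZ2 ouw !mulr0.
Qed.

Lemma RAP_neg (R : rcfType) (G P : 'M[R]_4) : RAP_structure G P -> RAP_structure G (- P).
Proof.
case=> hGT hpos hPP hPB; split => //.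
- by rewrite mulNmx mulmxN opprK.
- by move=> x y; rewrite !mulNmx -!scaleN1r bilZ1 bilZ2 hPB mulrA mulrNN mul1r mul1r.
Qed.

Definition eps (R : rcfType) (i : 'I_4) : R := if (i < 2)%N then 1 else -1.

Definition fb (R : rcfType) (f0 f1 f2 f3 : 'cV[R]_4) (i : 'I_4) : 'cV[R]_4 :=
  match val i with 0 => f0 | 1 => f1 | 2 => f2 | _ => f3 end.

Lemma exists_basis (R : rcfType) (G P : 'M[R]_4) : RAP_structure G P -> \tr P = 0 ->
  exists f0 f1 f2 f3 : 'cV[R]_4,
    (forall p q, bil G (fb f0 f1 f2 f3 p) (fb f0 f1 f2 f3 q) = (p == q)%:R) /\
    (forall p, P *m fb f0 f1 f2 f3 p = eps R p *: fb f0 f1 f2 f3 p).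
Proof.
move=> hS htr.
have [u [w [hu hw huu hww huw]]] := exists_half hS htr.
have htrN : \tr (- P) = 0 by rewrite raddfN /= htr oppr0.
have [u' [w' [hu' hw' huu' hww' huw']]] := exists_half (RAP_neg hS) htrN.
have hu'' : P *m u' = - u' by rewrite -[in RHS]hu' mulNmx opprK.
have hw'' : P *m w' = - w' by rewrite -[in RHS]hw' mulNmx opprK.
have sym x y : bil G x y = bil G y x by apply: bil_sym; case: hS.
have p1 := perp_pm hS hu hu''; have p2 := perp_pm hS hu hw''.
have p3 := perp_pm hS hw hu''; have p4 := perp_pm hS hw hw''.
exists u, w, u', w'; split.
- move=> p q.
  case: p => [[|[|[|[|//]]]] ?]; case: q => [[|[|[|[|//]]]] ?] /=;
  rewrite /fb /=; first [ by rewrite ?huu ?hww ?huu' ?hww' ?huw ?huw' ?p1 ?p2 ?p3 ?p4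
        | by rewrite sym ?huu ?hww ?huu' ?hww' ?huw ?huw' ?p1 ?p2 ?p3 ?p4 ].
- move=> p; case: p => [[|[|[|[|//]]]] ?] /=; rewrite /fb /eps /= ?scale1r ?scaleN1r //.
Qed.

Definition Fm (R : rcfType) (f : 'I_4 -> 'cV[R]_4) : 'M[R]_4 := \matrix_(i, p) f p i 0.

Lemma FGF (R : rcfType) (G : 'M[R]_4) (f : 'I_4 -> 'cV[R]_4) :
  (forall p q, bil G (f p) (f q) = (p == q)%:R) -> (Fm f)^T *m G *m Fm f = 1%:M.
Proof.
move=> hON; apply/matrixP => p q; rewrite [RHS]mxE -hON bilE mxE.
apply: eq_bigr => j _; rewrite !mxE; congr (_ * _).
by apply: eq_bigr => i _; rewrite !mxE.
Qed.

Lemma FFG (R : rcfType) (G : 'M[R]_4) (f : 'I_4 -> 'cV[R]_4) :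
  (forall p q, bil G (f p) (f q) = (p == q)%:R) -> Fm f *m (Fm f)^T *m G = 1%:M.
Proof. by move=> hON; rewrite -mulmxA; apply: mulmx1C; rewrite FGF. Qed.

Lemma invG_entry (R : rcfType) (G : 'M[R]_4) (f : 'I_4 -> 'cV[R]_4) i j :
  (forall p q, bil G (f p) (f q) = (p == q)%:R) ->
  invmx G i j = \sum_p f p i 0 * f p j 0.
Proof.
move=> hON; have h := FFG hON.
have hU : G \in unitmx by case: (mulmx1_unit h).
have -> : invmx G = Fm f *m (Fm f)^T by rewrite -[LHS]mul1mx -h mulmxK.
by rewrite mxE; apply: eq_bigr => p _; rewrite !mxE.
Qed.

Lemma coord_expand (R : rcfType) (G : 'M[R]_4) (f : 'I_4 -> 'cV[R]_4) (x : 'cV[R]_4) i :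
  (forall p q, bil G (f p) (f q) = (p == q)%:R) ->
  x i 0 = \sum_p f p i 0 * bil G (f p) x.
Proof.
move=> hON; have h := FFG hON.
have e : x = Fm f *m ((Fm f)^T *m G *m x) by rewrite !mulmxA h mul1mx.
rewrite {1}e [LHS]mxE; apply: eq_bigr => p _; rewrite mxE; congr (_ * _).
rewrite bilE mxE; apply: eq_bigr => j _; rewrite !mxE; congr (_ * _).
by apply: eq_bigr => k _; rewrite !mxE.
Qed.

Lemma lin_expand (R : rcfType) (G : 'M[R]_4) (f : 'I_4 -> 'cV[R]_4) (phi : 'cV[R]_4 -> R) x :
  (forall p q, bil G (f p) (f q) = (p == q)%:R) -> lin phi ->
  phi x = \sum_p bil G (f p) x * phi (f p).
Proof.
move=> hON hphi; rewrite (lin_std x hphi).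
under eq_bigr => i _ do rewrite (coord_expand x i hON) mulr_suml.
rewrite exchange_big /=; apply: eq_bigr => p _.
rewrite (lin_std (f p) hphi) mulr_sumr; apply: eq_bigr => i _; ring.
Qed.

Lemma contraction (R : rcfType) (G : 'M[R]_4) (f : 'I_4 -> 'cV[R]_4)
  (beta : 'cV[R]_4 -> 'cV[R]_4 -> R) :
  (forall p q, bil G (f p) (f q) = (p == q)%:R) ->
  (forall v, lin (fun u => beta u v)) -> (forall u, lin (beta u)) ->
  \sum_i \sum_j invmx G i j * beta (evec R i) (evec R j) = \sum_p beta (f p) (f p).
Proof.
move=> hON h1 h2.
under eq_bigr => i _ do under eq_bigr => j _ do rewrite (invG_entry i j hON) mulr_suml.
under eq_bigr => i _ do rewrite exchange_big /=.
rewrite exchange_big /=; apply: eq_bigr => p _.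
rewrite (lin_std (f p) (h1 (f p))); apply: eq_bigr => i _.
rewrite (lin_std (f p) (h2 (evec R i))) mulr_sumr; apply: eq_bigr => j _; ring.
Qed.

Definition hp (R : rcfType) (p q : 'I_4) : R :=
  if (val p == val q) && (val p < 2)%N then 1 else 0.
Definition hm (R : rcfType) (p q : 'I_4) : R :=
  if (val p == val q) && (2 <= val p)%N then 1 else 0.
Definition Kp (R : rcfType) (p q r s : 'I_4) : R := hp R p s * hp R q r - hp R p r * hp R q s.
Definition Km (R : rcfType) (p q r s : 'I_4) : R := hm R p s * hm R q r - hm R p r * hm R q s.

Lemma table (R : rcfType) (P : 'M[R]_4) (Lc : 'I_4 -> 'I_4 -> 'I_4 -> 'I_4 -> R)
  (f0 f1 f2 f3 : 'cV[R]_4) :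
  riemannian_P_tensor P Lc -> P *m f0 = 1 *: f0 -> P *m f1 = 1 *: f1 ->
  P *m f2 = (-1) *: f2 -> P *m f3 = (-1) *: f3 ->
  forall p q r s,
    tens4 Lc (fb f0 f1 f2 f3 p) (fb f0 f1 f2 f3 q) (fb f0 f1 f2 f3 r) (fb f0 f1 f2 f3 s)
    = tens4 Lc f0 f1 f1 f0 * Kp R p q r s + tens4 Lc f2 f3 f3 f2 * Km R p q r s.
Proof.
move=> hL e0 e1 e2 e3.
have d12 x z w : tens4 Lc x x z w = 0 by exact: (T_diag12 x z w hL).
have d34 x y z : tens4 Lc x y z z = 0 by exact: (T_diag34 x y z hL).
have m12 x y z w s t : P *m x = s *: x -> P *m y = t *: y -> s * t = -1 ->
  tens4 Lc x y z w = 0 by move=> hx hy hst; exact: (T_mix12 z w hL hx hy hst).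
have m34 x y z w s t : P *m z = s *: z -> P *m w = t *: w -> s * t = -1 ->
  tens4 Lc x y z w = 0 by move=> hx hy hst; exact: (T_mix34 x y hL hx hy hst).
have cr1 x y z w : P *m x = 1 *: x -> P *m y = 1 *: y ->
  P *m z = (-1) *: z -> P *m w = (-1) *: w -> tens4 Lc x y z w = 0.
  by move=> hx hy hz hw; exact: (T_cross hL hx hy hz hw).
have cr2 x y z w : P *m x = 1 *: x -> P *m y = 1 *: y ->
  P *m z = (-1) *: z -> P *m w = (-1) *: w -> tens4 Lc z w x y = 0.
  by move=> hx hy hz hw; rewrite (T_pair hL); exact: (T_cross hL hx hy hz hw).
case: (hL) => [[hA hB _] _].
have n1 : tens4 Lc f0 f1 f0 f1 = - tens4 Lc f0 f1 f1 f0 by rewrite hB.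
have n2 : tens4 Lc f1 f0 f1 f0 = - tens4 Lc f0 f1 f1 f0 by rewrite hA.
have n3 : tens4 Lc f1 f0 f0 f1 = tens4 Lc f0 f1 f1 f0 by rewrite hA hB opprK.
have n4 : tens4 Lc f2 f3 f2 f3 = - tens4 Lc f2 f3 f3 f2 by rewrite hB.
have n5 : tens4 Lc f3 f2 f3 f2 = - tens4 Lc f2 f3 f3 f2 by rewrite hA.
have n6 : tens4 Lc f3 f2 f2 f3 = tens4 Lc f2 f3 f3 f2 by rewrite hA hB opprK.
move=> p q r s.
case: p => [[|[|[|[|//]]]] ?]; case: q => [[|[|[|[|//]]]] ?];
case: r => [[|[|[|[|//]]]] ?]; case: s => [[|[|[|[|//]]]] ?];
rewrite /fb /Kp /Km /hp /hm /=;
first [ rewrite d12; ring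
      | rewrite d34; ring
      | erewrite m12; [ring | eassumption | eassumption | ring]
      | erewrite m34; [ring | eassumption | eassumption | ring]
      | erewrite cr1; [ring | eassumption | eassumption | eassumption | eassumption]
      | erewrite cr2; [ring | eassumption | eassumption | eassumption | eassumption]
      | rewrite ?n1 ?n2 ?n3 ?n4 ?n5 ?n6; ring ].
Qed.


Lemma sum4 (R : rcfType) (F : 'I_4 -> R) :
  \sum_(i < 4) F i = F (@Ordinal 4 0 erefl) + F (@Ordinal 4 1 erefl)
                     + F (@Ordinal 4 2 erefl) + F (@Ordinal 4 3 erefl).
Proof.
rewrite !big_ord_recl big_ord0 addr0 !addrA.
by congr (_ + _ + _ + _); congr F; apply: val_inj.
Qed.

Lemma rho_lin2 (R : rcfType) (G : 'M[R]_4) Lc z : lin (fun y => rho G Lc y z).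
Proof.
move=> a u v; rewrite /rho mulr_sumr -big_split; apply: eq_bigr => i _.
rewrite mulr_sumr -big_split; apply: eq_bigr => j _.
rewrite (T_lin2 Lc) /=; ring.
Qed.

Lemma rho_lin3 (R : rcfType) (G : 'M[R]_4) Lc y : lin (fun z => rho G Lc y z).
Proof.
move=> a u v; rewrite /rho mulr_sumr -big_split; apply: eq_bigr => i _.
rewrite mulr_sumr -big_split; apply: eq_bigr => j _.
rewrite (T_lin3 Lc) /=; ring.
Qed.

Lemma rhos_lin2 (R : rcfType) (G P : 'M[R]_4) Lc z : lin (fun y => rhostar G P Lc y z).
Proof.
move=> a u v; rewrite /rhostar mulr_sumr -big_split; apply: eq_bigr => i _.
rewrite mulr_sumr -big_split; apply: eq_bigr => j _.
rewrite (T_lin2 Lc) /=; ring.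
Qed.

Lemma rhos_lin3 (R : rcfType) (G P : 'M[R]_4) Lc y : lin (fun z => rhostar G P Lc y z).
Proof.
move=> a u v; rewrite /rhostar mulr_sumr -big_split; apply: eq_bigr => i _.
rewrite mulr_sumr -big_split; apply: eq_bigr => j _.
rewrite (T_lin3 Lc) /=; ring.
Qed.

Lemma linP (R : rcfType) (P : 'M[R]_4) (phi : 'cV[R]_4 -> R) :
  lin phi -> lin (fun v => phi (P *m v)).
Proof. by move=> h a u v; rewrite mulmxDr -scalemxAr h. Qed.

Lemma bil_ext (R : rcfType) (G : 'M[R]_4) (f : 'I_4 -> 'cV[R]_4)
  (b1 b2 : 'cV[R]_4 -> 'cV[R]_4 -> R) :
  (forall p q, bil G (f p) (f q) = (p == q)%:R) ->
  (forall v, lin (fun u => b1 u v)) -> (forall u, lin (b1 u)) ->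
  (forall v, lin (fun u => b2 u v)) -> (forall u, lin (b2 u)) ->
  (forall p q, b1 (f p) (f q) = b2 (f p) (f q)) -> forall y z, b1 y z = b2 y z.
Proof.
move=> hON h1 h1' h2 h2' hpq y z.
rewrite (lin_expand y hON (h1 z)) (lin_expand y hON (h2 z)); apply: eq_bigr => p _.
congr (_ * _).
rewrite (lin_expand z hON (h1' (f p))) (lin_expand z hON (h2' (f p))); apply: eq_bigr => q _.
by rewrite hpq.
Qed.

Lemma expand4 (R : rcfType) (G : 'M[R]_4) (f : 'I_4 -> 'cV[R]_4) Lc x y z w :
  (forall p q, bil G (f p) (f q) = (p == q)%:R) ->
  tens4 Lc x y z w = \sum_p \sum_q \sum_r \sum_s
     (bil G (f p) x * bil G (f q) y * bil G (f r) z * bil G (f s) w) *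
      tens4 Lc (f p) (f q) (f r) (f s).
Proof.
move=> hON.
rewrite (lin_expand x hON (T_lin1 Lc y z w)); apply: eq_bigr => p _.
rewrite (lin_expand y hON (T_lin2 Lc (f p) z w)) mulr_sumr; apply: eq_bigr => q _.
rewrite (lin_expand z hON (T_lin3 Lc (f p) (f q) w)) !mulr_sumr; apply: eq_bigr => r _.
rewrite (lin_expand w hON (T_lin4 Lc (f p) (f q) (f r))) !mulr_sumr; apply: eq_bigr => s _.
ring.
Qed.


Unset Implicit Arguments.

Theorem proposition3p3 (R : rcfType) (G P : 'M[R]_4)
  (Lc : 'I_4 -> 'I_4 -> 'I_4 -> 'I_4 -> R)
  (hGP : RAP_structure G P) (htr : \tr P = 0)
  (hL : riemannian_P_tensor P Lc) :
  [/\ (forall y z : 'cV[R]_4,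
         rho G Lc y z = (tau G Lc * bil G y z + taustar G P Lc * gtilde G P y z) / 4),
      (forall x y : 'cV[R]_4,
         bil G x x = 1 -> bil G y y = 1 -> bil G x y = 0 ->
         bil G x (P *m x) = 0 -> bil G x (P *m y) = 0 ->
         bil G y (P *m x) = 0 -> bil G y (P *m y) = 0 ->
         tens4 Lc x y y x = tau G Lc / 8) &
      (forall x : 'cV[R]_4,
         bil G x x = 1 -> bil G x (P *m x) = 0 ->
         tens4 Lc x (P *m x) (P *m x) x = 0)].
Proof.
have [f0 [f1 [f2 [f3 [hON hE]]]]] := exists_basis hGP htr.
have hPP : P *m P = 1%:M by case: hGP.
have hGT : G^T = G by case: hGP.
set f := fb f0 f1 f2 f3 in hON hE.
have e0 : P *m f0 = 1 *: f0 := hE (@Ordinal 4 0 erefl).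
have e1 : P *m f1 = 1 *: f1 := hE (@Ordinal 4 1 erefl).
have e2 : P *m f2 = (-1) *: f2 := hE (@Ordinal 4 2 erefl).
have e3 : P *m f3 = (-1) *: f3 := hE (@Ordinal 4 3 erefl).
have tab := table hL e0 e1 e2 e3.
set a := tens4 Lc f0 f1 f1 f0 in tab.
set b := tens4 Lc f2 f3 f3 f2 in tab.
have rho_f y z : rho G Lc y z = \sum_p tens4 Lc (f p) y z (f p).
  rewrite /rho (contraction (beta := fun u v : 'cV[R]_4 => tens4 Lc u y z v) hON) //.
  - by move=> v; exact: T_lin1.
  - by move=> u; exact: T_lin4.
have rhos_f y z : rhostar G P Lc y z = \sum_p eps R p * tens4 Lc (f p) y z (f p).
  rewrite /rhostar (contraction (beta := fun u v : 'cV[R]_4 => tens4 Lc u y z (P *m v)) hON) /=.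
  - by apply: eq_bigr => p _; rewrite hE T_scale4.
  - by move=> v; exact: T_lin1.
  - by move=> u; apply: linP; exact: T_lin4.
have tau_f : tau G Lc = \sum_p rho G Lc (f p) (f p).
  rewrite /tau (contraction (beta := fun u v : 'cV[R]_4 => rho G Lc u v) hON) //.
  - by move=> v; exact: rho_lin2.
  - by move=> u; exact: rho_lin3.
have taus_f : taustar G P Lc = \sum_p rhostar G P Lc (f p) (f p).
  rewrite /taustar (contraction (beta := fun u v : 'cV[R]_4 => rhostar G P Lc u v) hON) //.
  - by move=> v; exact: rhos_lin2.
  - by move=> u; exact: rhos_lin3.
have tauv : tau G Lc = 2 * a + 2 * b.
  rewrite tau_f; under eq_bigr => q _ do rewrite rho_f.
  under eq_bigr => q _ do under eq_bigr => p _ do rewrite tab.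
  rewrite !sum4 /Kp /Km /hp /hm /=; ring.
have tausv : taustar G P Lc = 2 * a - 2 * b.
  rewrite taus_f; under eq_bigr => q _ do rewrite rhos_f.
  under eq_bigr => q _ do under eq_bigr => p _ do rewrite tab.
  rewrite !sum4 /eps /Kp /Km /hp /hm /=; ring.
have part1 : forall y z : 'cV[R]_4,
    rho G Lc y z = (tau G Lc * bil G y z + taustar G P Lc * gtilde G P y z) / 4.
  apply: (bil_ext hON).
  - by move=> v; exact: rho_lin2.
  - by move=> u; exact: rho_lin3.
  - move=> v c u u'; rewrite /gtilde.
    have h1 := bil_lin1 G v c u u'; have h2 := bil_lin1 G (P *m v) c u u'.
    simpl in h1, h2; rewrite h1 h2; ring.
  - move=> u c v v'; rewrite /gtilde.
    have h1 := bil_lin2 G u c v v'; have h2 := linP P (bil_lin2 G u) c v v'.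
    simpl in h1, h2; rewrite h1 h2; ring.
  move=> p q; rewrite rho_f; under eq_bigr => k _ do rewrite tab.
  rewrite tauv tausv /gtilde hE bilZ2 hON.
  case: p => [[|[|[|[|//]]]] ?]; case: q => [[|[|[|[|//]]]] ?];
  rewrite sum4 /eps /Kp /Km /hp /hm /=; lra.
have pars u v : bil G u v = \sum_p bil G (f p) v * bil G (f p) u.
  rewrite (lin_expand v hON (bil_lin2 G u)); apply: eq_bigr => p _ /=.
  by rewrite (bil_sym u (f p) hGT).
have parsP u v : bil G u (P *m v) = \sum_p bil G (f p) v * (eps R p * bil G (f p) u).
  rewrite (lin_expand v hON (linP P (bil_lin2 G u))); apply: eq_bigr => p _ /=.
  by rewrite hE bilZ2 (bil_sym u (f p) hGT).
split => //; last first.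
  by move=> x _ _; exact: T_part3.
move=> x y hxx hyy hxy hxPx hxPy hyPx hyPy.
rewrite (expand4 Lc x y y x hON).
under eq_bigr => p _ do under eq_bigr => q _ do under eq_bigr => r _ do
  under eq_bigr => s _ do rewrite tab.
rewrite pars in hxx; rewrite pars in hyy; rewrite pars in hxy.
rewrite parsP in hxPx; rewrite parsP in hxPy; rewrite parsP in hyPy.
rewrite !sum4 /f /fb /eps /= in hxx hyy hxy hxPx hxPy hyPy.
rewrite tauv !sum4 /Kp /Km /hp /hm /f /fb /=.
set c0 := bil G f0 x in hxx hyy hxy hxPx hxPy hyPy *; set c1 := bil G f1 x in hxx hyy hxy hxPx hxPy hyPy *; set c2 := bil G f2 x in hxx hyy hxy hxPx hxPy hyPy *; set c3 := bil G f3 x in hxx hyy hxy hxPx hxPy hyPy *.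
set d0 := bil G f0 y in hxx hyy hxy hxPx hxPy hyPy *; set d1 := bil G f1 y in hxx hyy hxy hxPx hxPy hyPy *; set d2 := bil G f2 y in hxx hyy hxy hxPx hxPy hyPy *; set d3 := bil G f3 y in hxx hyy hxy hxPx hxPy hyPy *.
have s1 : c0*c0 + c1*c1 = 1/2 by lra.
have s2 : c2*c2 + c3*c3 = 1/2 by lra.
have s3 : d0*d0 + d1*d1 = 1/2 by lra.
have s4 : d2*d2 + d3*d3 = 1/2 by lra.
have s5 : c0*d0 + c1*d1 = 0 by lra.
have s6 : c2*d2 + c3*d3 = 0 by lra.
have X : (c0*d1 - c1*d0)^+2 = (c0*c0+c1*c1)*(d0*d0+d1*d1) - (c0*d0+c1*d1)^+2 by ring.
have Y : (c2*d3 - c3*d2)^+2 = (c2*c2+c3*c3)*(d2*d2+d3*d3) - (c2*d2+c3*d3)^+2 by ring.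
rewrite s1 s3 s5 in X; rewrite s2 s4 s6 in Y.
transitivity (a * (c0*d1 - c1*d0)^+2 + b * (c2*d3 - c3*d2)^+2); first ring.
rewrite X Y expr0n /=; lra.
Qed.
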